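(* Let $n\ge 2$, $\gamma\in\,]0,1]$, and let $\varphi:\mathbb{R}^{n-1}\to\mathbb{R}$ be Hölder continuous with exponent $\gamma$, i.e. $|\varphi(\bar x)-\varphi(\bar y)|\le M|\bar x-\bar y|^{\gamma}$ for all $\bar x,\bar y\in\mathbb{R}^{n-1}$ and some $M\ge 0$; let $\mathrm{Lip}_\gamma\varphi$ denote the best such constant $M$. Let $$\Omega=\{x=(\bar x,x_n)\in\mathbb{R}^n:\ x_n<\varphi(\bar x)\}.$$ Then for all $x\in\overline{\Omega}$ and all $h>0$, $$C_\gamma(x,h,\mathrm{Lip}_\gamma\varphi)\subset\Omega .$$ Moreover, there exists $c>0$ depending only on $n$, $\gamma$ and $\mathrm{Lip}_\gamma\varphi$ such that $$|B_\gamma(x,r)\cap\Omega|\ge c\, r^{n_\gamma}\qquad\text{for all } x\in\overline{\Omega}\text{ and all } r>0 .$$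
   Context: Points of $\mathbb{R}^n$ are written $x=(\bar x,x_n)$ with $\bar x\in\mathbb{R}^{n-1}$, $x_n\in\mathbb{R}$. For $\gamma\in\,]0,1]$, $\delta_\gamma(x,y)=\max\{|\bar x-\bar y|^\gamma,|x_n-y_n|\}$ and $B_\gamma(x,r)=\{y\in\mathbb{R}^n:\delta_\gamma(x,y)<r\}=\{y:\ |\bar x-\bar y|<r^{1/\gamma},\ |x_n-y_n|<r\}$. Set $n_\gamma=\frac{n-1}{\gamma}+1$. For $x\in\mathbb{R}^n$, $h>0$, $M\ge0$, the cusp with exponent $\gamma$, vertex $x$, height $h$ and opening $M$ is $C_\gamma(x,h,M)=\{y\in\mathbb{R}^n:\ x_n-h<y_n<x_n-M|\bar y-\bar x|^\gamma\}$. $|\cdot|$ of a set denotes Lebesgue measure. *)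

(* Defs.v *)
From HB Require Import structures.
From mathcomp Require Import all_boot all_order all_algebra.
From mathcomp Require Import all_classical all_reals all_analysis.
Set Implicit Arguments. Unset Strict Implicit. Unset Printing Implicit Defensive.
Import Order.TTheory GRing.Theory Num.Theory.
Import numFieldNormedType.Exports.
Local Open Scope classical_set_scope.
Local Open Scope ring_scope.

(* Points of R^n, n = m.+1, are pairs (xbar, x_n) with xbar : 'rV[R]_m
   (i.e. R^(n-1)) and x_n : R.  The topology is the product topology. *)
Notation pt R m := (('rV[R]_m * R)%type).

Section Defs.
Variables (R : realType) (m : nat).

Definition enorm (v : 'rV[R]_m) : R := Num.sqrt (\sum_(i < m) (v 0 i) ^+ 2).

Definition holder_with (g M : R) (phi : 'rV[R]_m -> R) : Prop :=
  forall xb yb : 'rV[R]_m, `|phi xb - phi yb| <= M * powR (enorm (xb - yb)) g.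

Definition is_holder (g : R) (phi : 'rV[R]_m -> R) : Prop :=
  exists M, 0 <= M /\ holder_with g M phi.

Definition Lip (g : R) (phi : 'rV[R]_m -> R) : R :=
  inf [set M : R | 0 <= M /\ holder_with g M phi].

Definition Omega (phi : 'rV[R]_m -> R) : set (pt R m) :=
  [set x | x.2 < phi x.1].

Definition Bg (g : R) (x : pt R m) (r : R) : set (pt R m) :=
  [set y | powR (enorm (x.1 - y.1)) g < r /\ `|x.2 - y.2| < r].

Definition cusp (g : R) (x : pt R m) (h M : R) : set (pt R m) :=
  [set y | x.2 - h < y.2 /\ y.2 < x.2 - M * powR (enorm (y.1 - x.1)) g].

(* Lebesgue (outer) measure on R^n = R^(n-1) x R, via countable covers by
   half-open boxes [a, b[. *)
Definition box (a b : pt R m) : set (pt R m) :=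
  [set x : pt R m | (forall i, a.1 0 i <= x.1 0 i < b.1 0 i) /\ a.2 <= x.2 < b.2].

Definition box_vol (a b : pt R m) : R :=
  (\prod_(i < m) Num.max 0 (b.1 0 i - a.1 0 i)) * Num.max 0 (b.2 - a.2).

Definition leb (A : set (pt R m)) : \bar R :=
  ereal_inf [set s : \bar R | exists a b : nat -> pt R m,
     A `<=` \bigcup_k box (a k) (b k) /\
     s = (\sum_(0 <= k <oo) (box_vol (a k) (b k))%:E)%E].

End Defs.

(* Main.v *)
Require Import Defs.
From HB Require Import structures.
From mathcomp Require Import all_boot all_order all_algebra.
From mathcomp Require Import all_classical all_reals all_analysis.
Set Implicit Arguments. Unset Strict Implicit. Unset Printing Implicit Defensive.
Import Order.TTheory GRing.Theory Num.Theory.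
Import numFieldNormedType.Exports.
Local Open Scope classical_set_scope.
Local Open Scope ring_scope.
From mathcomp Require Import measurable_realfun.
From mathcomp Require Import lra ring.
Section OneD.
Variable R : realType.
Local Open Scope ereal_scope.

Lemma int_indic (C a b : R) : (0 <= C)%R ->
  \int[(@lebesgue_measure R)]_(t in setT) (C * \1_`[a, b[ t)%:E = (C * Num.max 0 (b - a))%:E.
Proof.
move=> C0.
have := @integralZl_indic _ _ _ (@lebesgue_measure R) setT measurableT (fun _ => `[a, b[%classic) C.
move=> /= ->; last 2 first.
  by move=> /(le_lt_trans C0); rewrite ltxx.
  exact: measurable_itv.
rewrite integral_indic // setIT.

have := lebesgue_measure_itv `[a, b[; move=> /= ->.
rewrite lte_fin; case: ltP => ab.
  by rewrite -EFinB -EFinM max_r // subr_ge0 ltW.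
by rewrite max_l ?mulr0 ?subr_le0 ?mule0.
Qed.

Lemma mind (C a b : R) : measurable_fun setT (fun t : R => (C * \1_`[a, b[ t)%:E).
Proof.
apply/measurable_EFinP; apply: measurable_funM => //.
all: try exact/measurable_indic/measurable_itv.
Qed.

Lemma oneD (C a b : R) (W A B : nat -> R) : (0 <= C)%R -> (forall j, 0 <= W j)%R ->
  (forall t, (C * \1_`[a, b[ t)%:E <= \sum_(0 <= j <oo) (W j * \1_`[A j, B j[ t)%:E) ->
  (C * Num.max 0 (b - a))%:E <= \sum_(0 <= j <oo) (W j * Num.max 0 (B j - A j))%:E.
Proof.
move=> C0 W0 H.
rewrite -int_indic //.
rewrite (eq_eseriesr (fun j _ => esym (int_indic (A j) (B j) (W0 j)))).
rewrite -integral_nneseries //; last first.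
  by move=> j t _; rewrite lee_fin mulr_ge0.
  by move=> j; exact: mind.
apply: ge0_le_integral => //.
- by move=> t _; rewrite lee_fin mulr_ge0.
- exact: mind.
- apply: ge0_emeasurable_sum => //.
    by move=> j t _ _; rewrite lee_fin mulr_ge0.
  by move=> j _; exact: mind.
Qed.
End OneD.

Section Multi.
Variables (R : realType) (m : nat).
Local Open Scope ereal_scope.

Definition Pk (k : nat) (a b x : 'rV[R]_m) : R :=
  \prod_(i < m | (i < k)%N) \1_`[a 0 i, b 0 i[ (x 0 i).
Definition Vk (k : nat) (a b : 'rV[R]_m) : R :=
  \prod_(i < m | (i < k)%N) Num.max 0 (b 0 i - a 0 i).

Lemma split_prod k (hk : (k < m)%N) (F : 'I_m -> R) :
  (\prod_(i < m | (i < k.+1)%N) F i = (\prod_(i < m | (i < k)%N) F i) * F (Ordinal hk))%R.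
Proof.
rewrite (bigD1 (Ordinal hk)) //= mulrC; congr (_ * _)%R.
by apply: eq_bigl => i; rewrite ltnS ltn_neqAle andbC -val_eqE.
Qed.

Lemma Pk_ge0 k a b x : (0 <= Pk k a b x)%R.
Proof. by apply: prodr_ge0 => i _; rewrite indicE. Qed.

Lemma Q k : (k <= m)%N -> forall (c : R) (w : nat -> R) (a b : 'rV[R]_m) (A B : nat -> 'rV[R]_m),
  (0 <= c)%R -> (forall j, 0 <= w j)%R ->
  (forall x, (c * Pk k a b x)%:E <= \sum_(0 <= j <oo) (w j * Pk k (A j) (B j) x)%:E) ->
  (c * Vk k a b)%:E <= \sum_(0 <= j <oo) (w j * Vk k (A j) (B j))%:E.
Proof.
elim: k => [_|k IH hk] c w a b A B c0 w0 H.
  have p0 : forall F : 'I_m -> R, (\prod_(i < m | (i < 0)%N) F i = 1)%R.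
    by move=> F; rewrite big_pred0.
  have := H (0%R : 'rV[R]_m); rewrite /Pk /Vk !p0.
  rewrite (eq_eseriesr (fun j _ => congr1 (fun z => (w j * z)%:E) (p0 _))).
  by rewrite (eq_eseriesr (fun j _ => congr1 (fun z => (w j * z)%:E) (p0 _))).
set kk := Ordinal hk.
have lenge0 : forall (u v : 'rV[R]_m), (0 <= Num.max 0 (v ord0 kk - u ord0 kk))%R.
  by move=> u v; rewrite le_max lexx.
have := IH (ltnW hk) (c * Num.max 0 (b ord0 kk - a ord0 kk))%R
  (fun j => w j * Num.max 0 (B j ord0 kk - A j ord0 kk))%R a b A B.
move=> /(_ (mulr_ge0 c0 (lenge0 _ _)) (fun j => mulr_ge0 (w0 j) (lenge0 _ _))).
rewrite /Vk split_prod -/kk mulrA mulrAC.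
under [X in _ -> _ <= X]eq_eseriesr do rewrite split_prod -/kk mulrA mulrAC.
move=> HH; apply: HH => x.
pose xt := fun t : R => (\row_(i < m) (if i == kk then t else x ord0 i) : 'rV[R]_m).
have Pxt : forall u v t, Pk k.+1 u v (xt t) = (Pk k u v x * \1_`[u ord0 kk, v ord0 kk[ t)%R.
  move=> u v t; rewrite /Pk split_prod -/kk; congr (_ * _)%R.
    apply: eq_bigr => i ik; rewrite /xt mxE; case: eqP => // ie.
    by move: ik; rewrite ie /= ltnn.
  by rewrite /xt mxE eqxx.
have := oneD (W := (fun j => w j * Pk k (A j) (B j) x)%R) (A := fun j => A j ord0 kk) (B := fun j => B j ord0 kk)
   (a := a ord0 kk) (b := b ord0 kk) (mulr_ge0 c0 (Pk_ge0 _ _ _ _)) (fun j => mulr_ge0 (w0 j) (Pk_ge0 _ _ _ _)).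
rewrite mulrAC.
under [X in _ -> _ <= X]eq_eseriesr do rewrite mulrAC.
apply=> t.
have := H (xt t); rewrite Pxt mulrA.
by under [X in _ <= X -> _]eq_eseriesr do rewrite Pxt mulrA.
Qed.
End Multi.

Section Box.
Variables (R : realType) (m : nat).
Local Open Scope ereal_scope.

Lemma term_le_series (u : nat -> \bar R) k : (forall n, 0 <= u n) ->
  u k <= \sum_(0 <= i <oo) u i.
Proof.
move=> u0; apply: le_trans (nneseries_lim_ge k.+1 (fun n _ _ => u0 n)).
rewrite big_nat_recr //=; apply: lee_paddl.
by apply: sume_ge0 => i _.
all: by [].
Qed.

Lemma ind_eq (p q t : R) : \1_`[p, q[ t = ((p <= t < q)%R)%:R :> R.
Proof.
rewrite indicE; congr (GRing.natmul _ (nat_of_bool _)).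
by apply/idP/idP; rewrite ?inE /= ?in_itv /=; try (move=> h; apply/mem_set; rewrite /= in_itv).
Qed.

Lemma Pk_ind (u v x : 'rV[R]_m) (p q t : R) :
  (Pk m u v x * \1_`[p, q[ t)%R =
  (([forall i, (u ord0 i <= x ord0 i < v ord0 i)%R] && (p <= t < q)%R))%:R.
Proof.
rewrite ind_eq; case: (boolP [forall i, _]) => /= [/forallP H|/forallPn [i Hi]].
  rewrite /Pk big1 ?mul1r // => i _; rewrite ind_eq.
  by have := H i; case: (_ && _).
rewrite /Pk (bigD1 i) ?ltn_ord //= ind_eq (negbTE Hi) mul0r mul0r.
by [].
Qed.

Lemma box_cover (a b : pt R m) (A B : nat -> pt R m) :
  box a b `<=` \bigcup_k box (A k) (B k) ->
  (box_vol a b)%:E <= \sum_(0 <= k <oo) (box_vol (A k) (B k))%:E.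
Proof.
move=> sub.
have ePk : forall u v : 'rV[R]_m, (\prod_(i < m) Num.max 0 (v ord0 i - u ord0 i))%R = Vk m u v.
  by move=> u v; rewrite /Vk; apply: eq_bigl => i; rewrite ltn_ord.
rewrite /box_vol ePk mulrC.
under eq_eseriesr do rewrite ePk mulrC.
apply: (Q (leqnn m)).
- by rewrite le_max lexx.
- by move=> j; rewrite le_max lexx.
move=> x.
rewrite mulrC; under eq_eseriesr do rewrite mulrC.
apply: oneD; [exact: Pk_ge0|by move=> j; exact: Pk_ge0|].
move=> t; rewrite Pk_ind.
case E: [&& _, _ & _]; last first.
  by apply: nneseries_ge0 => n _ _; rewrite lee_fin mulr_ge0 // ?Pk_ge0 // indicE.
move: E => /and3P [/forallP H1 H2 H3].
have [k _ Hk] : (\bigcup_k box (A k) (B k)) (x, t) by apply: sub; split => //; apply/andP.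
apply: le_trans (term_le_series k _); last first.
  by move=> n; rewrite lee_fin mulr_ge0 ?Pk_ge0.
rewrite Pk_ind; case: Hk => /= H5 H4.
have -> : [forall i, ((A k).1 ord0 i <= x ord0 i < (B k).1 ord0 i)%R] by apply/forallP.
by move: H4 => /andP [-> ->].
Qed.
End Box.
Section G.
Variables (R : realType) (m : nat).

Lemma enorm_le (v : 'rV[R]_m) d : 0 <= d -> (forall i, `|v ord0 i| <= d) ->
  enorm v <= m%:R * d.
Proof.
move=> d0 H; rewrite /enorm.
have md0 : 0 <= m%:R * d by rewrite mulr_ge0.
rewrite -(ger0_norm md0) -sqrtr_sqr ler_sqrt ?sqr_ge0 //.
apply: (@le_trans _ _ (\sum_(i < m) d ^+ 2)).
  apply: ler_sum => i _; rewrite -real_normK ?num_real // !expr2.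
  by apply: ler_pM => //; exact: H.
rewrite sumr_const card_ord.
have hm : 0 <= m%:R * (m%:R - 1) :> R.
  case: (m) => [|k]; first by rewrite mul0r.
  by rewrite mulr_ge0 // -natr1 addrK.
rewrite -mulr_natr; nra.
Qed.

Lemma enormN (v : 'rV[R]_m) : enorm (- v) = enorm v.
Proof. by rewrite /enorm; congr Num.sqrt; apply: eq_bigr => i _; rewrite mxE sqrrN. Qed.

Lemma enormB (u v : 'rV[R]_m) : enorm (u - v) = enorm (v - u).
Proof. by rewrite -enormN opprB. Qed.

Lemma enorm_ge0 (v : 'rV[R]_m) : 0 <= enorm v.
Proof. exact: sqrtr_ge0. Qed.

Variable g : R.
Hypothesis g0 : 0 < g.

Lemma small (rho : R) (v : 'rV[R]_m) : 0 < rho ->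
  (forall i, `|v ord0 i| <= powR rho g^-1 / (m.+1)%:R) ->
  powR (enorm v) g < rho.
Proof.
move=> r0 H.
have p0 : 0 < powR rho g^-1 by rewrite powR_gt0.
have d0 : 0 <= powR rho g^-1 / (m.+1)%:R by rewrite divr_ge0 // ltW.
have := enorm_le d0 H => h1.
have h2 : m%:R * (powR rho g^-1 / (m.+1)%:R) < powR rho g^-1.
  rewrite mulrA ltr_pdivrMr ?ltr0Sn // mulrC ltr_pM2l //.
  by rewrite ltr_nat.
have := gt0_ltr_powR g0 (x := enorm v) (y := powR rho g^-1).
rewrite !nnegrE enorm_ge0 powR_ge0 -powRrM mulVf ?gt_eqF // powRr1 ?ltW //.
by apply => //; apply: le_lt_trans h1 h2.
Qed.

Lemma Lip_ge0 (phi : 'rV[R]_m -> R) : is_holder g phi -> 0 <= Lip g phi.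
Proof.
case=> M [M0 HM]; apply: lb_le_inf; first by exists M.
by move=> z [].
Qed.

Lemma Lip_holder (phi : 'rV[R]_m -> R) : is_holder g phi -> holder_with g (Lip g phi) phi.
Proof.
case=> M [M0 HM] xb yb.
have p0 := powR_ge0 (enorm (xb - yb)) g.
have [pe|pn] := eqVneq (powR (enorm (xb - yb)) g) 0.
  have := HM xb yb; rewrite pe !mulr0 => h.
  by [].
have pp : 0 < powR (enorm (xb - yb)) g by rewrite lt_neqAle eq_sym pn.
rewrite -ler_pdivrMr //.
apply: lb_le_inf; first by exists M.
by move=> z [z0 Hz]; rewrite ler_pdivrMr //; apply: Hz.
Qed.

End G.
Section Main.
Variables (R : realType) (m : nat) (g : R).
Hypothesis g0 : 0 < g.

Lemma ball_pt (x y : 'rV[R]_m * R) e : ball x e y ->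
  (forall i, `|x.1 ord0 i - y.1 ord0 i| < e) /\ `|x.2 - y.2| < e.
Proof.
case=> H1 H2; split; last by move: H2; rewrite -ball_normE.
by move=> i; case: H1 => _ H1; have := H1 ord0 i; rewrite -ball_normE.
Qed.

Lemma cl_le (phi : 'rV[R]_m -> R) (x : pt R m) : is_holder g phi ->
  x \in closure (Omega phi) -> x.2 <= phi x.1.
Proof.
move=> [M [M0 HM]]; rewrite inE => xcl.
rewrite leNgt; apply/negP => lt.
set e := (x.2 - phi x.1) / 2.
have e0 : 0 < e by rewrite divr_gt0 // subr_gt0.
set rho := e / (M + 1).
have rho0 : 0 < rho by rewrite divr_gt0 // ltr_wpDl.
set d := Num.min (powR rho g^-1 / (m.+1)%:R) e.
have d0 : 0 < d by rewrite lt_min e0 andbT divr_gt0 ?powR_gt0.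
have [y [Oy By]] := xcl _ (nbhsx_ballx x d d0).
have [B1 B2] := ball_pt By.
have Pl : powR (enorm (x.1 - y.1)) g < rho.
  apply: small => // i; rewrite !mxE; apply: ltW; apply: lt_le_trans (B1 i) _.
  by rewrite ge_min lexx.
have hh := HM x.1 y.1.
have Mr : M * powR (enorm (x.1 - y.1)) g <= M * rho by rewrite ler_wpM2l // ltW.
have Me : M * rho < e.
  rewrite /rho mulrA ltr_pdivrMr ?ltr_wpDl //; nra.
have de : d <= e by rewrite ge_min lexx orbT.
move: hh B2 Oy; rewrite /Omega /= ler_norml ltr_norml => /andP [h1 h2] /andP [h3 h4] Oy.
have : e * 2 = x.2 - phi x.1 by rewrite /e mulfVK ?pnatr_eq0.
lra.
Qed.
End Main.

Section Final.
Variables (R : realType) (m : nat) (g : R).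
Hypothesis g0 : 0 < g.

Lemma part1 (phi : 'rV[R]_m -> R) : is_holder g phi ->
     forall (x : pt R m) (h : R), x \in closure (Omega phi) -> 0 < h ->
       cusp g x h (Lip g phi) `<=` Omega phi.
Proof.
move=> H x h xcl h0 y [_ y2].
have := cl_le g0 H xcl => xle.
have := Lip_holder H x.1 y.1; rewrite ler_norml enormB => /andP [_ h2].
rewrite /Omega /=.
set P := Lip g phi * _ in h2 y2.
lra.
Qed.

Lemma box_sub (phi : 'rV[R]_m -> R) (x : pt R m) (r L : R) :
  holder_with g L phi -> 0 <= L -> x.2 <= phi x.1 -> 0 < r ->
  let rho := r * (4 * (L + 1))^-1 in
  let d := powR rho g^-1 / (m.+1)%:R in
  box (x.1 - const_mx d, x.2 - r / 2) (x.1 + const_mx d, x.2 - r / 4)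
    `<=` Bg g x r `&` Omega phi.
Proof.
move=> HL L0 xle r0 rho d y [Hi /andP [Ht1 Ht2]]; simpl in Ht1, Ht2.
have rho0 : 0 < rho by rewrite mulr_gt0 // invr_gt0 mulr_gt0 // ltr_wpDl.
have Pl : powR (enorm (x.1 - y.1)) g < rho.
  apply: small => // i; rewrite !mxE.
  have /andP [h1 h2] := Hi i; move: h1 h2; rewrite !mxE => h1 h2.
  rewrite ler_norml; apply/andP; split; rewrite -/d; lra.
have rhor : rho * (4 * (L + 1)) = r by rewrite /rho mulfVK // mulf_neq0 // gt_eqF // ltr_wpDl.
have Lrho : L * rho <= r / 4.
  rewrite ler_pdivlMr //; nra.
have P0 := powR_ge0 (enorm (x.1 - y.1)) g.
split.
  split; first by nra.
  rewrite ltr_norml; apply/andP; split; simpl in *; lra.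
have := HL x.1 y.1; rewrite ler_norml => /andP [_ h2].
have LP : L * powR (enorm (x.1 - y.1)) g <= L * rho by rewrite ler_wpM2l // ltW.
rewrite /Omega /=; simpl in *.
lra.
Qed.


Definition cst (L : R) : R :=
  2 ^+ m * powR (4 * (L + 1))^-1 (m%:R / g) / (m.+1)%:R ^+ m / 4.

Lemma cst_gt0 L : 0 <= L -> 0 < cst L.
Proof.
move=> L0; rewrite /cst !divr_gt0 ?mulr_gt0 ?exprn_gt0 ?powR_gt0 //.
by rewrite invr_gt0 mulr_gt0 // ltr_wpDl.
Qed.

Lemma vol_eq (x : pt R m) (r L : R) : 0 < r -> 0 <= L ->
  let rho := r * (4 * (L + 1))^-1 in
  let d := powR rho g^-1 / (m.+1)%:R in
  box_vol (x.1 - const_mx d, x.2 - r / 2) (x.1 + const_mx d, x.2 - r / 4) =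
  cst L * powR r (m%:R / g + 1).
Proof.
move=> r0 L0 rho d.
have k0 : 0 < (4 * (L + 1))^-1 by rewrite invr_gt0 mulr_gt0 // ltr_wpDl.
have rho0 : 0 < rho by rewrite mulr_gt0.
have d0 : 0 < d by rewrite divr_gt0 ?powR_gt0.
rewrite /box_vol /=.
rewrite (eq_bigr (fun _ => 2 * d)); last first.
  by move=> i _; rewrite !mxE max_r; [ring|nra].
rewrite prodr_const card_ord max_r; last by lra.
rewrite powRD; last by rewrite (gt_eqF r0) implybT.
rewrite powRr1 ?ltW // /cst /d exprMn expr_div_n.
rewrite -(powR_mulrn _ (powR_ge0 _ _)) -powRrM /rho powRM ?ltW //.
rewrite [g^-1 * _]mulrC.
field.
by rewrite expf_neq0 // pnatr_eq0.
Qed.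

End Final.

(* n = m.+1 >= 2 *)
Theorem lemma2p1 (R : realType) (m : nat) (hm : (1 <= m)%N) (g : R)
    (hg : 0 < g <= 1) :
  (forall phi : 'rV[R]_m -> R, is_holder g phi ->
     forall (x : pt R m) (h : R), x \in closure (Omega phi) -> 0 < h ->
       cusp g x h (Lip g phi) `<=` Omega phi) /\
  (forall L : R, exists c : R, 0 < c /\
     forall phi : 'rV[R]_m -> R, is_holder g phi -> Lip g phi = L ->
       forall (x : pt R m) (r : R), x \in closure (Omega phi) -> 0 < r ->
         ((c * powR r (m%:R / g + 1))%:E <= leb (Bg g x r `&` Omega phi))%E).
Proof.
have g0 : 0 < g by case/andP: hg.
split.
  by move=> phi H x h xcl h0; exact: part1.
move=> L; exists (cst m g `|L|); split; first by apply: cst_gt0.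
move=> phi H eL x r xcl r0.
have L0 : 0 <= L by rewrite -eL; exact: Lip_ge0.
have HL : holder_with g `|L| phi by rewrite ger0_norm // -eL; exact: Lip_holder.
have xle := cl_le g0 H xcl.
rewrite -(@vol_eq R m g x r `|L| r0 (normr_ge0 L)).
apply: le_ereal_inf_tmp => s [A [B [cov ->]]].
apply: box_cover; apply: subset_trans cov; exact: box_sub.
Qed.
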